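(* Let $\Gamma$ be a context and $A$ a type. If for all possible-world models $\mathcal{M}$ it is the case that $\mathcal{M}([\![\Gamma]\!],[\![A]\!])$ is inhabited, then there is a term $t$ of type $A$ in context $\Gamma$ of $\mathrm{IK}_C$.
   Context: Types $A::=\iota\mid A\to B\mid\Box A$; contexts $\Gamma::=\cdot\mid\Gamma,A\mid\Gamma,\mathsf{lock}$ ($\mathsf{lock}$ the context lock). A possible-world model is a frame $(W,R_i,R_m)$ ($R_i$ reflexive transitive; factorization $R_m;R_i\subseteq R_i;R_m$) plus a valuation $V_\iota$ monotone along $R_i$; $\mathcal{M}(X,Y)$ is the type of families $\forall w.\,X_w\to Y_w$. Interpretation: $[\![\iota]\!]_w=V_{\iota,w}$, $[\![A\to B]\!]_w=\forall w'.\,w\mathrel{R_i}w'\to[\![A]\!]_{w'}\to[\![B]\!]_{w'}$, $[\![\Box A]\!]_w=\forall w'.\,w\mathrel{R_i}w'\to\forall v.\,w'\mathrel{R_m}v\to[\![A]\!]_v$, $[\![\cdot]\!]_w=\top$, $[\![\Gamma,A]\!]_w=[\![\Gamma]\!]_w\times[\![A]\!]_w$, $[\![\Gamma,\mathsf{lock}]\!]_w=\sum_u[\![\Gamma]\!]_u\times(u\mathrel{R_m}w)$. $\mathrm{IK}_C$ terms: STLC plus $\mathsf{box}\,t:\Box A$ in $\Gamma$ from $t:A$ in $\Gamma,\mathsf{lock}$, and $\mathsf{unbox}(t,e):A$ in $\Gamma$ from $t:\Box A$ in $\Delta$ with $\Gamma=\Delta,\mathsf{lock},\Delta'$ ($\Delta'$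 lock-free). *)

(* Defs.v *)
Inductive Ty : Type :=
| iota : Ty
| arr : Ty -> Ty -> Ty
| box : Ty -> Ty.

Inductive Ctx : Type :=
| cnil : Ctx
| cext : Ctx -> Ty -> Ctx
| clock : Ctx -> Ctx.

(* Variables: de Bruijn indices; a variable cannot be looked up past a lock. *)
Inductive Var : Ctx -> Ty -> Type :=
| vz : forall G A, Var (cext G A) A
| vs : forall G A B, Var G A -> Var (cext G B) A.

(* LFExt G D : G = D, D' with D' lock-free. *)
Inductive LFExt : Ctx -> Ctx -> Type :=
| lfnil : forall G, LFExt G G
| lfext : forall G D A, LFExt G D -> LFExt (cext G A) D.

Inductive Tm : Ctx -> Ty -> Type :=
| var : forall G A, Var G A -> Tm G A
| lam : forall G A B, Tm (cext G A) B -> Tm G (arr A B)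
| app : forall G A B, Tm G (arr A B) -> Tm G A -> Tm G B
| tbox : forall G A, Tm (clock G) A -> Tm G (box A)
| unbox : forall G D A, Tm D (box A) -> LFExt G (clock D) -> Tm G A.

Record Model : Type := {
  W : Type;
  Ri : W -> W -> Type;
  Rm : W -> W -> Type;
  Ri_refl : forall w, Ri w w;
  Ri_trans : forall w v u, Ri w v -> Ri v u -> Ri w u;
  factor : forall w v v', Rm w v -> Ri v v' -> { u : W & (Ri w u * Rm u v')%type };
  Viota : W -> Type;
  Viota_mono : forall w w', Ri w w' -> Viota w -> Viota w'
}.

Fixpoint evalTy (M : Model) (A : Ty) (w : W M) : Type :=
  match A with
  | iota => Viota M w
  | arr A B => forall w', Ri M w w' -> evalTy M A w' -> evalTy M B w'
  | box A => forall w', Ri M w w' -> forall v, Rm M w' v -> evalTy M A v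
  end.

Fixpoint evalCtx (M : Model) (G : Ctx) (w : W M) : Type :=
  match G with
  | cnil => unit
  | cext G A => (evalCtx M G w * evalTy M A w)%type
  | clock G => { u : W M & (evalCtx M G u * Rm M u w)%type }
  end.

(* M(X, Y) : families  forall w, X w -> Y w. *)
Definition Hom (M : Model) (X Y : W M -> Type) : Type := forall w, X w -> Y w.

(* Main.v *)
Require Import Defs.
From Stdlib Require Import Program.Equality.

Inductive Wk : Ctx -> Ctx -> Type :=
| wnil : Wk cnil cnil
| wdrop : forall G D A, Wk G D -> Wk G (cext D A)
| wkeep : forall G D A, Wk G D -> Wk (cext G A) (cext D A)
| wlock : forall G D, Wk G D -> Wk (clock G) (clock D).
Arguments wdrop {G D} A _.
Arguments wkeep {G D} A _.
Arguments wlock {G D} _.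
Arguments vz {G A}.
Arguments vs {G A} B _.
Arguments lfext {G D} A _.
Arguments var {G A} _.
Arguments lam {G A B} _.
Arguments app {G A B} _ _.
Arguments tbox {G A} _.
Arguments unbox {G D A} _ _.

Fixpoint wid (G : Ctx) : Wk G G :=
  match G with
  | cnil => wnil
  | cext G A => wkeep A (wid G)
  | clock G => wlock (wid G)
  end.

Lemma wtrans : forall G D E, Wk G D -> Wk D E -> Wk G E.
Proof.
  intros G D E w1 w2. revert G w1.
  induction w2; intros G1 w1.
  - exact w1.
  - exact (wdrop A (IHw2 _ w1)).
  - dependent destruction w1.
    + exact (wdrop A (IHw2 _ w1)).
    + exact (wkeep A (IHw2 _ w1)).
  - dependent destruction w1. exact (wlock (IHw2 _ w1)).
Qed.
Arguments wtrans {G D E} _ _.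

Lemma factorW : forall G G', Wk G G' -> forall D, LFExt G (clock D) ->
  { D' : Ctx & (Wk D D' * LFExt G' (clock D'))%type }.
Proof.
  intros G G' w. induction w; intros D0 e.
  - dependent destruction e.
  - destruct (IHw _ e) as [D' [w' e']]. exists D'. split; [exact w'|exact (lfext A e')].
  - dependent destruction e. destruct (IHw _ e) as [D' [w' e']].
    exists D'. split; [exact w'|exact (lfext A e')].
  - dependent destruction e. exists D. split; [exact w| exact (lfnil _)].
Qed.
Arguments factorW {G G'} _ {D} _.

Lemma renV : forall G D, Wk G D -> forall A, Var G A -> Var D A.
Proof.
  intros G D w. induction w; intros B x.
  - dependent destruction x.
  - exact (vs A (IHw _ x)).
  - dependent destruction x.
    + exact vz.
    + exact (vs A (IHw _ x)).
  - dependent destruction x.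
Qed.
Arguments renV {G D} _ {A} _.

Lemma ren : forall G A, Tm G A -> forall D, Wk G D -> Tm D A.
Proof.
  intros G A t. induction t; intros D0 w.
  - exact (var (renV w v)).
  - exact (lam (IHt _ (wkeep A w))).
  - exact (app (IHt1 _ w) (IHt2 _ w)).
  - exact (tbox (IHt _ (wlock w))).
  - destruct (factorW w l) as [D' [w' e']]. exact (unbox (IHt _ w') e').
Qed.
Arguments ren {G A} _ {D} _.


Definition U : Model := {|
  W := Ctx;
  Ri := Wk;
  Rm := fun G D => LFExt D (clock G);
  Ri_refl := wid;
  Ri_trans := @wtrans;
  factor := fun w v v' m r => factorW r m;
  Viota := fun G => Tm G iota;
  Viota_mono := fun w w' r t => ren t r
|}.

Fixpoint reflect (A : Ty) : forall G, Tm G A -> evalTy U A G :=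
  match A with
  | iota => fun G t => t
  | arr A B => fun G t D (w : Wk G D) a => reflect B D (app (ren t w) (reify A D a))
  | box A => fun G t D (w : Wk G D) V (m : LFExt V (clock D)) =>
      reflect A V (unbox (ren t w) m)
  end
with reify (A : Ty) : forall G, evalTy U A G -> Tm G A :=
  match A with
  | iota => fun G t => t
  | arr A B => fun G f =>
      lam (reify B (cext G A) (f (cext G A) (wdrop A (wid G)) (reflect A (cext G A) (var vz))))
  | box A => fun G f => tbox (reify A (clock G) (f G (wid G) (clock G) (lfnil _)))
  end.

Definition monoTy (A : Ty) : forall D D', Wk D D' -> evalTy U A D -> evalTy U A D' :=
  match A with
  | iota => fun D D' w t => ren t w
  | arr A B => fun D D' w f E w' a => f E (wtrans w w') a
  | box A => fun D D' w f E w' => f E (wtrans w w')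
  end.

Arguments monoTy {A D D'} _ _.

Lemma monoCtx : forall G D D', Wk D D' -> evalCtx U G D -> evalCtx U G D'.
Proof.
  induction G; intros D D' w g; simpl in *.
  - exact tt.
  - destruct g as [g a]. exact (IHG _ _ w g, monoTy w a).
  - destruct g as [u [g m]]. destruct (factorW w m) as [u' [w' m']].
    exists u'. exact (IHG _ _ w' g, m').
Qed.

Arguments monoCtx {G D D'} _ _.

Lemma idEnv : forall G, evalCtx U G G.
Proof.
  induction G; simpl.
  - exact tt.
  - exact (monoCtx (wdrop t (wid G)) IHG, reflect t _ (var vz)).
  - exists G. exact (IHG, lfnil _).
Qed.

Theorem theorem7 (G : Ctx) (A : Ty) :
  (forall M : Model, inhabited (Hom M (evalCtx M G) (evalTy M A))) ->
  inhabited (Tm G A).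
Proof.
  intros H. destruct (H U) as [h]. constructor.
  exact (reify A G (h G (idEnv G))).
Qed.
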